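(* The category $\mathfrak{B}$ whose objects are Bochvar algebras and whose morphisms are homomorphisms of Bochvar algebras is equivalent to the category $\mathfrak{S}$ whose objects are Bochvar systems and whose morphisms are the Bochvar-system morphisms defined below. The equivalence is given by the functors $\Gamma:\mathfrak{B}\to\mathfrak{S}$ and $\Xi:\mathfrak{S}\to\mathfrak{B}$ described below.
   Context: Let $\mathbf{WK}^e$ be the three-element algebra on $\{0,\tfrac12,1\}$ of type $\langle \wedge,\vee,\neg,J_2,0,1\rangle$ (arities $2,2,1,1,0,0$). Its operations are: - $\neg$ swaps $0$ and $1$ and fixes $\tfrac12$; - $\wedge,\vee$ agree with the two-element Boolean operations on $\{0,1\}$ and return $\tfrac12$ whenever an argument is $\tfrac12$; - $J_2(1)=1$ and $J_2(\tfrac12)=J_2(0)=0$. A Bochvar algebra is a member of the quasivariety $ISP(\mathbf{WK}^e)$. Płonka sums. A semilattice direct system consists of: - a join-semilattice $\langle I,\vee,i_0\rangle$ with least element $i_0$; - pairwise disjoint similar algebras $\mathbf{A}_i$ ($i\in I$), called fibres; - homomorphisms $p_{ij}:\mathbf{A}_i\to\mathbf{A}_j$ for $i\le j$, with $p_{ii}=\mathrm{id}$ and $p_{jk}\circ p_{ij}=p_{ik}$. Its Płonka sum has universe $\bigsqcup_i A_i$. Operations are $g(a_1,\dots,a_n)=g^{\mathbf{A}_k}(p_{i_1k}(a_1),\dots,p_{i_nk}(a_n))$ for $a_m\in A_{i_m}$ and $k=i_1\vee\dots\vee i_n$; constants are taken from $\mathbf{A}_{i_0}$. Every Bochvar algebra's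 $\{\wedge,\vee,\neg,0,1\}$-reduct is canonically (up to isomorphism) a Płonka sum of Boolean algebras, with bottom fibre $\mathbf{A}_{i_0}$. Two elements $a,b$ lie in the same fibre iff $a\wedge(a\vee b)=a$ and $b\wedge(b\vee a)=b$. A Bochvar system is a pair $\langle\mathbf{B},\mathbf{I}\rangle$ where $\mathbf{B}$ is a Boolean algebra and $I\subseteq B$ contains $1$ and is closed under $\wedge$. A morphism $\langle\mathbf{B}_1,\mathbf{I}_1\rangle\to\langle\mathbf{B}_2,\mathbf{I}_2\rangle$ is a Boolean homomorphism $g:\mathbf{B}_1\to\mathbf{B}_2$ with $g(I_1)\subseteq I_2$. The functor $\Gamma$: - On a Bochvar algebra $\mathbf{A}$ with fibres $\mathbf{A}_i$, set $\Gamma(\mathbf{A})=\langle\mathbf{A}_{i_0},K\rangle$ with $K=\{J_2(1^{A_i}):i\in I\}$, where $1^{A_i}$ is the top of fibre $\mathbf{A}_i$. - On a homomorphism $f$, $\Gamma(f)$ is the restriction of $f$ to the bottom fibre. The functor $\Xi$. For a Bochvar system $\langle\mathbf{B},\mathbf{I}\rangle$, write $[i)$ for the principal filter of $\mathbf{B}$ generated by $i$, and $\mathbf{B}/[i)$ for the quotient by the congruence associated to $[i)$. - $\Xi(\langle\mathbf{B},\mathbf{I}\rangle)$ is the unique Bochvar algebra whose involutive-bisemilattice reduct is the Płonka sum of the following system: index semilattice $I$ with the order dual to that of $\mathbf{B}$ (so $1$ is least); fibres $\mathbf{B}/[i)$; maps $p_{ij}(a/[i))=a/[j)$. Its $J_2$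 sends $a/[i)$ to the unique element of the bottom fibre $\mathbf{B}/[1)\cong\mathbf{B}$ lying in $[0,i]$ and congruent to $a$ modulo $[i)$. - On a morphism $g$, $\Xi(g)(a/[i))=g(a)/[g(i))$. *)

(* Defs.v *)
From Stdlib Require Import FunctionalExtensionality Setoid.
Set Implicit Arguments.

Inductive three : Type := t0 | th | t1.   (* 0, 1/2, 1 *)

Definition meet3 (x y : three) : three :=
  match x, y with
  | th, _ => th
  | _, th => th
  | t1, t1 => t1
  | _, _ => t0
  end.

Definition join3 (x y : three) : three :=
  match x, y with
  | th, _ => th
  | _, th => th
  | t0, t0 => t0
  | _, _ => t1
  end.

Definition neg3 (x : three) : three :=
  match x with t0 => t1 | th => th | t1 => t0 end.

Definition J2_3 (x : three) : three :=
  match x with t1 => t1 | _ => t0 end.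

Record bsig : Type := BSig {
  bcar :> Type;
  bmeet : bcar -> bcar -> bcar;
  bjoin : bcar -> bcar -> bcar;
  bneg  : bcar -> bcar;
  bJ2   : bcar -> bcar;
  bzero : bcar;
  bone  : bcar }.

Arguments bmeet {b}. Arguments bjoin {b}. Arguments bneg {b}.
Arguments bJ2 {b}. Arguments bzero {b}. Arguments bone {b}.

Definition WKe : bsig := @BSig three meet3 join3 neg3 J2_3 t0 t1.

Definition WKpow (X : Type) : bsig :=
  @BSig (X -> WKe)
    (fun a b x => @bmeet WKe (a x) (b x))
    (fun a b x => @bjoin WKe (a x) (b x))
    (fun a x => @bneg WKe (a x))
    (fun a x => @bJ2 WKe (a x))
    (fun _ => @bzero WKe)
    (fun _ => @bone WKe).

Definition bhom (A B : bsig) (f : A -> B) : Prop :=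
  (forall a b, f (bmeet a b) = bmeet (f a) (f b)) /\
  (forall a b, f (bjoin a b) = bjoin (f a) (f b)) /\
  (forall a, f (bneg a) = bneg (f a)) /\
  (forall a, f (bJ2 a) = bJ2 (f a)) /\
  f bzero = bzero /\
  f bone = bone.
Arguments bhom {A B} f.

(* Bochvar algebra: member of ISP(WK^e), i.e. isomorphic to a subalgebra
   of a direct power of WK^e: there is an injective homomorphism into a
   power of WK^e. *)
Definition is_bochvar (A : bsig) : Prop :=
  exists (X : Type) (h : A -> WKpow X),
    (forall a b, h a = h b -> a = b) /\ bhom h.

(* Płonka fibres: a and b lie in the same fibre. *)
Definition same_fibre (A : bsig) (a b : A) : Prop :=
  bmeet a (bjoin a b) = a /\ bmeet b (bjoin b a) = b.

Arguments same_fibre {A} a b.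

Definition in_bottom (A : bsig) (a : A) : Prop := same_fibre a bzero.
Arguments in_bottom {A} a.

(* c is the top element 1^{A_i} of its fibre A_i (w.r.t. the Boolean
   order of that fibre: b <= c iff b /\ c = b). *)
Definition fibre_top (A : bsig) (c : A) : Prop :=
  forall b : A, same_fibre b c -> bmeet b c = b.
Arguments fibre_top {A} c.

Record balg : Type := BAlg {
  acar :> Type;
  ameet : acar -> acar -> acar;
  ajoin : acar -> acar -> acar;
  acompl : acar -> acar;
  azero : acar;
  aone : acar }.

Arguments ameet {b}. Arguments ajoin {b}. Arguments acompl {b}.
Arguments azero {b}. Arguments aone {b}.

Record is_boolean (B : balg) : Prop := {
  ba_meetA : forall a b c : B, ameet a (ameet b c) = ameet (ameet a b) c;
  ba_joinA : forall a b c : B, ajoin a (ajoin b c) = ajoin (ajoin a b) c;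
  ba_meetC : forall a b : B, ameet a b = ameet b a;
  ba_joinC : forall a b : B, ajoin a b = ajoin b a;
  ba_meetK : forall a b : B, ameet a (ajoin a b) = a;
  ba_joinK : forall a b : B, ajoin a (ameet a b) = a;
  ba_distr : forall a b c : B, ameet a (ajoin b c) = ajoin (ameet a b) (ameet a c);
  ba_meet1 : forall a : B, ameet a aone = a;
  ba_join0 : forall a : B, ajoin a azero = a;
  ba_complM : forall a : B, ameet a (acompl a) = azero;
  ba_complJ : forall a : B, ajoin a (acompl a) = aone }.

Definition bool_hom (B1 B2 : balg) (g : B1 -> B2) : Prop :=
  (forall a b, g (ameet a b) = ameet (g a) (g b)) /\
  (forall a b, g (ajoin a b) = ajoin (g a) (g b)) /\
  (forall a, g (acompl a) = acompl (g a)) /\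
  g azero = azero /\
  g aone = aone.
Arguments bool_hom {B1 B2} g.

Record bsys : Type := BSys { sB :> balg; sI : sB -> Prop }.

Record is_system (S : bsys) : Prop := {
  sys_bool : is_boolean S;
  sys_I1 : sI S aone;
  sys_Imeet : forall i j, sI S i -> sI S j -> sI S (ameet i j) }.

Definition sys_hom (S1 S2 : bsys) (g : S1 -> S2) : Prop :=
  bool_hom g /\ (forall i, sI S1 i -> sI S2 (g i)).
Arguments sys_hom {S1 S2} g.

Section Emb.
Variables (A : bsig) (X : Type) (h : A -> WKpow X).
Hypothesis hinj : forall a b, h a = h b -> a = b.
Hypothesis hh : bhom h.

Lemma emb_bottom (a : A) : in_bottom a <-> forall x, h a x <> th.
Proof.
destruct hh as (Hm & Hj & Hn & HJ & H0 & H1).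
unfold in_bottom, same_fibre; split.
- intros [_ E] x Hx. apply (f_equal h) in E.
  rewrite Hm, Hj, H0 in E. apply (f_equal (fun f => f x)) in E.
  simpl in E. rewrite Hx in E. discriminate.
- intros Hx; split; apply hinj; rewrite Hm, Hj, ?H0;
  apply functional_extensionality; intro x; simpl;
  generalize (Hx x); destruct (h a x); simpl; congruence.
Qed.

Lemma emb_meet (a b : A) : in_bottom a -> in_bottom b -> in_bottom (bmeet a b).
Proof.
destruct hh as (Hm & _).
intros Ha0 Hb0; apply emb_bottom;
  pose proof (proj1 (emb_bottom a) Ha0) as Ha; pose proof (proj1 (emb_bottom b) Hb0) as Hb.
intro x; rewrite Hm; simpl; generalize (Ha x) (Hb x).
destruct (h a x), (h b x); simpl; congruence.
Qed.

Lemma emb_join (a b : A) : in_bottom a -> in_bottom b -> in_bottom (bjoin a b).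
Proof.
destruct hh as (_ & Hj & _).
intros Ha0 Hb0; apply emb_bottom;
  pose proof (proj1 (emb_bottom a) Ha0) as Ha; pose proof (proj1 (emb_bottom b) Hb0) as Hb.
intro x; rewrite Hj; simpl; generalize (Ha x) (Hb x).
destruct (h a x), (h b x); simpl; congruence.
Qed.

Lemma emb_neg (a : A) : in_bottom a -> in_bottom (bneg a).
Proof.
destruct hh as (_ & _ & Hn & _).
intros Ha0; apply emb_bottom; pose proof (proj1 (emb_bottom a) Ha0) as Ha.
intro x; rewrite Hn; simpl; generalize (Ha x).
destruct (h a x); simpl; congruence.
Qed.

Lemma emb_zero : in_bottom (bzero : A).
Proof.
destruct hh as (_ & _ & _ & _ & H0 & _).
apply emb_bottom; intro x; rewrite H0; simpl; congruence.
Qed.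

Lemma emb_one : in_bottom (bone : A).
Proof.
destruct hh as (_ & _ & _ & _ & _ & H1).
apply emb_bottom; intro x; rewrite H1; simpl; congruence.
Qed.
End Emb.

Section GammaObj.
Variables (A : bsig) (HA : is_bochvar A).

Lemma bot_meet (a b : A) : in_bottom a -> in_bottom b -> in_bottom (bmeet a b).
Proof. destruct HA as (X & h & hi & hh). apply (emb_meet hi hh). Qed.
Lemma bot_join (a b : A) : in_bottom a -> in_bottom b -> in_bottom (bjoin a b).
Proof. destruct HA as (X & h & hi & hh). apply (emb_join hi hh). Qed.
Lemma bot_neg (a : A) : in_bottom a -> in_bottom (bneg a).
Proof. destruct HA as (X & h & hi & hh). apply (emb_neg hi hh). Qed.
Lemma bot_zero : in_bottom (bzero : A).
Proof. destruct HA as (X & h & hi & hh). exact (emb_zero hi hh). Qed.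
Lemma bot_one : in_bottom (bone : A).
Proof. destruct HA as (X & h & hi & hh). exact (emb_one hi hh). Qed.
End GammaObj.

Definition Gcar (A : bsig) : Type := {a : A | in_bottom a}.

Definition Gamma (A : bsig) (HA : is_bochvar A) : bsys :=
  BSys
    (@BAlg (Gcar A)
       (fun a b => exist _ (bmeet (proj1_sig a) (proj1_sig b))
                      (bot_meet HA (proj2_sig a) (proj2_sig b)))
       (fun a b => exist _ (bjoin (proj1_sig a) (proj1_sig b))
                      (bot_join HA (proj2_sig a) (proj2_sig b)))
       (fun a => exist _ (bneg (proj1_sig a)) (bot_neg HA (proj2_sig a)))
       (exist _ bzero (bot_zero HA))
       (exist _ bone (bot_one HA)))
    (fun k => exists c : A, fibre_top c /\ proj1_sig k = bJ2 c).

Arguments Gamma : clear implicits.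

Lemma bhom_bottom (A A' : bsig) (f : A -> A') (Hf : bhom f) (a : A) :
  in_bottom a -> in_bottom (f a).
Proof.
destruct Hf as (Hm & Hj & _ & _ & H0 & _).
unfold in_bottom, same_fibre; intros [E1 E2].
rewrite <- H0, <- !Hj, <- !Hm, E1, E2; split; reflexivity.
Qed.

Definition GammaMor (A1 : bsig) (HA1 : is_bochvar A1)
  (A2 : bsig) (HA2 : is_bochvar A2) (f : A1 -> A2) (Hf : bhom f) :
  Gamma A1 HA1 -> Gamma A2 HA2 :=
  fun a => exist _ (f (proj1_sig a)) (bhom_bottom Hf (proj2_sig a)).

Arguments GammaMor {A1} HA1 {A2} HA2 {f} Hf.

(* An element a/[i) of the fibre B/[i) (i in I) is represented by the pair
   (i, a /\ i), the canonical representative of the class a/[i) lying in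
   [0, i]  (a == b mod [i)  iff  a /\ i = b /\ i). *)
Definition Xcar (S : bsys) : Type :=
  {p : S * S | sI S (fst p) /\ ameet (snd p) (fst p) = snd p}.

Lemma Xmk_ok (S : bsys) (HS : is_system S) (k : S) (Hk : sI S k) (x : S) :
  sI S (fst (k, ameet x k)) /\
  ameet (snd (k, ameet x k)) (fst (k, ameet x k)) = snd (k, ameet x k).
Proof.
simpl; split; [exact Hk|].
destruct (sys_bool HS) as [mA _ mC _ mK jK _ _ _ _ _].
rewrite <- mA.
assert (E : ameet k k = k).
{ rewrite <- (jK k k) at 2. rewrite mK. reflexivity. }
rewrite E; reflexivity.
Qed.

Arguments Xmk_ok : clear implicits.

Definition Xmk (S : bsys) (HS : is_system S) (k : S) (Hk : sI S k) (x : S) :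
  Xcar S := exist _ (k, ameet x k) (Xmk_ok S HS k Hk x).

Arguments Xmk {S} HS k Hk x.

Definition Xidx (S : bsys) (p : Xcar S) : S := fst (proj1_sig p).
Definition Xval (S : bsys) (p : Xcar S) : S := snd (proj1_sig p).
Arguments Xmk {S} HS k Hk x.

Definition XidxI (S : bsys) (p : Xcar S) : sI S (Xidx p) := proj1 (proj2_sig p).

(* Płonka sum over the index semilattice <I, /\ (dual order), 1>, fibres
   B/[i), transition maps a/[i) |-> a/[j); J2(a/[i)) = the element of
   B/[1) = B in [0,i] congruent to a mod [i). *)
Definition Xi (S : bsys) (HS : is_system S) : bsig :=
  @BSig (Xcar S)
    (fun p q => Xmk HS _ (sys_Imeet HS _ _ (XidxI p) (XidxI q))
                    (ameet (Xval p) (Xval q)))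
    (fun p q => Xmk HS _ (sys_Imeet HS _ _ (XidxI p) (XidxI q))
                    (ajoin (Xval p) (Xval q)))
    (fun p => Xmk HS _ (XidxI p) (acompl (Xval p)))
    (fun p => Xmk HS _ (sys_I1 HS) (ameet (Xval p) (Xidx p)))
    (Xmk HS _ (sys_I1 HS) azero)
    (Xmk HS _ (sys_I1 HS) aone).

Arguments Xi : clear implicits.

Definition XiMor (S1 : bsys) (HS1 : is_system S1)
  (S2 : bsys) (HS2 : is_system S2) (g : S1 -> S2) (Hg : sys_hom g) :
  Xi S1 HS1 -> Xi S2 HS2 :=
  fun p => Xmk HS2 _ (proj2 Hg _ (XidxI p)) (g (Xval p)).

Arguments XiMor {S1} HS1 {S2} HS2 {g} Hg.

(* Main.v *)
Require Import Defs.
From Stdlib Require Import Classical ClassicalEpsilon FunctionalExtensionality PropExtensionality ProofIrrelevance.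
From mathcomp Require classical_sets.
Set Implicit Arguments.

Lemma my_zorn (T : Type) (P : (T -> Prop) -> Prop) :
  (forall F : (T -> Prop) -> Prop, (forall X, F X -> P X) ->
     (forall X Y, F X -> F Y -> (forall t, X t -> Y t) \/ (forall t, Y t -> X t)) ->
     P (fun t => exists X, F X /\ X t)) ->
  exists A, P A /\ forall B, P B -> (forall t, A t -> B t) -> forall t, B t -> A t.
Proof.
intros H.
destruct (@classical_sets.Zorn_bigcup T P) as [A [PA HA]].
- intros F FP Ftot.
  match goal with |- P ?U => replace U with (fun t => exists X, F X /\ X t) end.
  + apply H; [exact FP|]. intros X Y HX HY. exact (Ftot X Y HX HY).
  + apply functional_extensionality; intro t.
    apply propositional_extensionality.
    unfold classical_sets.bigcup; simpl. split; [intros [X [h1 h2]]; exists X; auto|intros [X h1 h2]; exists X; auto].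
- exists A; split; [exact PA|]. intros B PB AB t Bt.
  apply NNPP; intro nA. apply (HA B); [|exact PB].
  split; [exact AB|]. intro BA. exact (nA (BA t Bt)).
Qed.

Definition bhom2 {B : balg} (phi : B -> bool) : Prop :=
  (forall a b, phi (ameet a b) = andb (phi a) (phi b)) /\
  (forall a b, phi (ajoin a b) = orb (phi a) (phi b)) /\
  (forall a, phi (acompl a) = negb (phi a)) /\
  phi azero = false /\ phi aone = true.

Definition ble {B : balg} (x y : B) := ameet x y = x.

Definition isF {B : balg} (F : B -> Prop) :=
  F aone /\ (forall x y, F x -> F y -> F (ameet x y)) /\
  (forall x y, F x -> ble x y -> F y) /\ ~ F azero.

Section BA.
Variable B : balg.
Hypothesis HB : is_boolean B.

Let mA := ba_meetA HB.
Let mC := ba_meetC HB.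
Let jC := ba_joinC HB.
Let mK := ba_meetK HB.
Let jK := ba_joinK HB.
Let distr := ba_distr HB.
Let m1 := ba_meet1 HB.
Let j0 := ba_join0 HB.
Let cM := ba_complM HB.
Let cJ := ba_complJ HB.

Lemma meet_idem (a : B) : ameet a a = a.
Proof. pose proof (mK a (ameet a a)) as E. rewrite jK in E. exact E. Qed.

Lemma meet0 (a : B) : ameet a azero = azero.
Proof. rewrite <- (cM a), mA, meet_idem. reflexivity. Qed.

Lemma le_meet_l (a b : B) : ble (ameet a b) a.
Proof. unfold ble. rewrite <- (mA a b a), (mC b a), (mA a a b), meet_idem. reflexivity. Qed.

Lemma le_meet_r (a b : B) : ble (ameet a b) b.
Proof. unfold ble. rewrite <- mA, meet_idem. reflexivity. Qed.

Lemma le_trans (u x z : B) : ble u x -> ble x z -> ble u z.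
Proof. unfold ble; intros H1 H2. rewrite <- H1, <- mA, H2. reflexivity. Qed.

Lemma le_glb (u x y : B) : ble u x -> ble u y -> ble u (ameet x y).
Proof. unfold ble; intros H1 H2. rewrite mA, H1, H2. reflexivity. Qed.

Lemma compl0_le (f a : B) : ameet f (acompl a) = azero -> ameet f a = f.
Proof.
intro E. rewrite <- (j0 (ameet f a)), <- E, <- distr, cJ, m1. reflexivity.
Qed.

Lemma join_compl_zero (a b : B) :
  ameet (ajoin a b) (ameet (acompl a) (acompl b)) = azero.
Proof.
rewrite mC, distr.
assert (E1 : ameet (ameet (acompl a) (acompl b)) a = azero).
{ rewrite (mC (acompl a)), <- mA, (mC (acompl a) a), cM, meet0. reflexivity. }
assert (E2 : ameet (ameet (acompl a) (acompl b)) b = azero).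
{ rewrite <- mA, (mC (acompl b) b), cM, meet0. reflexivity. }
rewrite E1, E2, j0. reflexivity.
Qed.

Lemma ultra (c : B) : c <> azero ->
  exists U, isF U /\ U c /\ forall a, U a \/ U (acompl a).
Proof.
intro Hc.
pose (P := fun F : B -> Prop => (forall x, ~ F x) \/ (isF F /\ F c)).
destruct (my_zorn P) as [A [PA Amax]].
- intros F FP Ftot.
  assert (FPnz : forall X, F X -> forall t, X t -> isF X /\ X c).
  { intros X FX t Xt. destruct (FP X FX) as [E|E]; [exfalso; exact (E t Xt)|exact E]. }
  destruct (classic (exists X, F X /\ exists t, X t)) as [[X0 [FX0 [t0 Xt0]]]|Hne].
  + right. split; [split; [|split; [|split]]|].
    * exists X0. split; [exact FX0|]. apply (FPnz X0 FX0 t0 Xt0).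
    * intros x y [X [FX Xx]] [Y [FY Yy]].
      destruct (Ftot X Y FX FY) as [XY|YX].
      -- exists Y. split; [exact FY|]. apply (FPnz Y FY y Yy); auto.
      -- exists X. split; [exact FX|]. apply (FPnz X FX x Xx); auto.
    * intros x y [X [FX Xx]] Hxy. exists X. split; [exact FX|].
      apply (FPnz X FX x Xx) with x; auto.
    * intros [X [FX HX0]]. apply (FPnz X FX _ HX0). exact HX0.
    * exists X0. split; [exact FX0|]. apply (FPnz X0 FX0 t0 Xt0).
  + left. intros x [X [FX Xx]]. apply Hne. exists X. split; [exact FX|]. exists x; exact Xx.
- destruct PA as [Aempty|[AF Ac]].
  + exfalso.
    pose (B0 := fun x : B => ble c x).
    assert (PB0 : P B0).
    { right. split; [split; [|split; [|split]]|]; unfold B0.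
      - unfold ble. apply m1.
      - intros x y. apply le_glb.
      - intros x y. apply le_trans.
      - unfold ble. rewrite meet0. intro E. apply Hc. symmetry; exact E.
      - unfold ble. apply meet_idem. }
    apply (Aempty c). apply (Amax B0 PB0); [intros t At; exfalso; exact (Aempty t At)|].
    unfold B0, ble. apply meet_idem.
  + exists A. split; [exact AF|]. split; [exact Ac|].
    intro a. destruct (classic (A a)) as [Aa|nAa]; [left; exact Aa|right].
    destruct AF as [A1 [Am [Au A0]]].
    pose (G := fun x : B => exists f, A f /\ ble (ameet f (acompl a)) x).
    assert (PG : P G).
    { right. split; [split; [|split; [|split]]|]; unfold G.
      - exists aone. split; [exact A1|]. unfold ble. apply m1.
      - intros x y [f1 [Af1 H1]] [f2 [Af2 H2]]. exists (ameet f1 f2).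
        split; [apply Am; assumption|]. apply le_glb.
        + apply le_trans with (ameet f1 (acompl a)); [|exact H1].
          apply le_glb; [|apply le_meet_r].
          apply le_trans with (ameet f1 f2); apply le_meet_l.
        + apply le_trans with (ameet f2 (acompl a)); [|exact H2].
          apply le_glb; [|apply le_meet_r].
          apply le_trans with (ameet f1 f2); [apply le_meet_l|apply le_meet_r].
      - intros x y [f [Af H1]] H2. exists f. split; [exact Af|]. apply le_trans with x; assumption.
      - intros [f [Af H1]]. unfold ble in H1. rewrite meet0 in H1.
        apply nAa. apply Au with f; [exact Af|]. unfold ble. apply compl0_le.
        symmetry; exact H1.
      - exists c. split; [exact Ac|]. apply le_meet_l. }
    apply (Amax G PG).
    * intros t At. exists t. split; [exact At|]. apply le_meet_l.
    * exists aone. split; [exact A1|]. apply le_meet_r.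
Qed.

Definition chi (U : B -> Prop) (x : B) : bool :=
  if excluded_middle_informative (U x) then true else false.

Lemma chi_t U x : U x -> chi U x = true.
Proof. unfold chi; destruct (excluded_middle_informative (U x)); tauto. Qed.
Lemma chi_f U x : ~ U x -> chi U x = false.
Proof. unfold chi; destruct (excluded_middle_informative (U x)); tauto. Qed.

Lemma chi_hom U : isF U -> (forall a, U a \/ U (acompl a)) -> bhom2 (chi U).
Proof.
intros [U1 [Um [Uu U0]]] Uult.
split; [|split; [|split; [|split]]].
- intros a b. destruct (classic (U a)) as [Ha|Ha].
  + destruct (classic (U b)) as [Hb|Hb].
    * rewrite !chi_t; auto.
    * assert (H' : ~ U (ameet a b)).
      { intro H. apply Hb. apply Uu with (ameet a b); [exact H|apply le_meet_r]. }
      rewrite (chi_f U b Hb), (chi_f U _ H'). rewrite Bool.andb_false_r; reflexivity.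
  + assert (H' : ~ U (ameet a b)).
    { intro H. apply Ha. apply Uu with (ameet a b); [exact H|apply le_meet_l]. }
    rewrite (chi_f U a Ha), (chi_f U _ H'). reflexivity.
- intros a b. destruct (classic (U a)) as [Ha|Ha].
  + rewrite (chi_t U a Ha), chi_t; [reflexivity|]. apply Uu with a; [exact Ha|]. apply mK.
  + destruct (classic (U b)) as [Hb|Hb].
    * rewrite (chi_t U b Hb), chi_t; [rewrite Bool.orb_true_r; reflexivity|].
      apply Uu with b; [exact Hb|]. unfold ble. rewrite jC. apply mK.
    * rewrite (chi_f U a Ha), (chi_f U b Hb), chi_f; [reflexivity|].
      intro H. apply U0. rewrite <- (join_compl_zero a b). apply Um; [exact H|].
      apply Um; [destruct (Uult a)|destruct (Uult b)]; tauto.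
- intro a. destruct (classic (U a)) as [Ha|Ha].
  + rewrite (chi_t U a Ha), chi_f; [reflexivity|]. intro H. apply U0.
    rewrite <- (cM a). apply Um; assumption.
  + rewrite (chi_f U a Ha), chi_t; [reflexivity|]. destruct (Uult a); tauto.
- apply chi_f; exact U0.
- apply chi_t; exact U1.
Qed.

Lemma sep_aux (x y : B) : ameet x (acompl y) <> azero ->
  exists phi, bhom2 phi /\ phi x = true /\ phi y = false.
Proof.
intro H. destruct (ultra H) as [U [UF [Uc Uult]]].
exists (chi U). pose proof (chi_hom UF Uult) as Hh. split; [exact Hh|].
destruct Hh as [Pm [_ [Pc _]]].
pose proof (chi_t U _ Uc) as E. rewrite Pm, Pc in E.
destruct (chi U x), (chi U y); simpl in E; try discriminate; auto.
Qed.

Lemma sep (x y : B) : (forall phi, bhom2 phi -> phi x = phi y) -> x = y.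
Proof.
intros H. apply NNPP; intro ne.
destruct (classic (ameet x (acompl y) = azero)) as [E1|E1].
- destruct (classic (ameet y (acompl x) = azero)) as [E2|E2].
  + apply ne. apply compl0_le in E1. apply compl0_le in E2.
    transitivity (ameet x y); [symmetry; exact E1|]. rewrite mC; exact E2.
  + destruct (@sep_aux y x E2) as [phi [Hp [A1 A2]]]. pose proof (H phi Hp). congruence.
- destruct (@sep_aux x y E1) as [phi [Hp [A1 A2]]]. pose proof (H phi Hp). congruence.
Qed.

End BA.

Ltac bool_ext HB :=
  apply (sep HB);
  let phi := fresh "phi" in
  let Pm := fresh "Pm" in let Pj := fresh "Pj" in let Pc := fresh "Pc" in
  let P0 := fresh "P0" in let P1 := fresh "P1" in
  intros phi [Pm [Pj [Pc [P0 P1]]]];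
  unfold XiMor, Xmk, Xidx, Xval in *; simpl in *;
  repeat match goal with H : @eq (acar _) _ _ |- _ => apply (f_equal phi) in H end;
  repeat progress (rewrite ?Pm, ?Pj, ?Pc, ?P0, ?P1 in *);
  repeat match goal with
         | |- context [phi ?a] => let E := fresh "E" in case_eq (phi a); intro E; try rewrite E in *; clear E
         | H : context [phi ?a] |- _ => let E := fresh "E" in case_eq (phi a); intro E; try rewrite E in *; clear E
         end;
  simpl in *; congruence.


Ltac ptw A h hinj hh :=
  let Hm := fresh "Hm" in let Hj := fresh "Hj" in let Hn := fresh "Hn" in
  let HJ := fresh "HJ" in let H0 := fresh "H0" in let H1 := fresh "H1" in
  pose proof hh as [Hm [Hj [Hn [HJ [H0 H1]]]]];
  apply hinj; apply functional_extensionality;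
  let x := fresh "x" in intro x;
  repeat match goal with H : @eq (bcar A) _ _ |- _ => apply (f_equal (fun a => h a x)) in H end;
  repeat match goal with H : forall y : _, _ |- _ => specialize (H x) end;
  repeat progress (rewrite ?Hm, ?Hj, ?Hn, ?HJ, ?H0, ?H1 in *); simpl in *;
  repeat match goal with
         | |- context [h ?a x] => let E := fresh "E" in case_eq (h a x); intro E; try rewrite E in *; clear E
         | H : context [h ?a x] |- _ => let E := fresh "E" in case_eq (h a x); intro E; try rewrite E in *; clear E
         end;
  simpl in *; congruence.

Definition emb {A : bsig} {X : Type} (h : A -> WKpow X) :=
  (forall a b, h a = h b -> a = b) /\ bhom h.

Lemma emb_ft_l (A : bsig) X (h : A -> WKpow X) (E : emb h) (c : A) :
  fibre_top c -> forall x, h c x <> t0.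
Proof.
destruct E as [hinj hh]. intros Hc x Hx.
assert (Hs : same_fibre (bjoin c (bneg c)) c).
{ split; clear Hc Hx; ptw A h hinj hh. }
pose proof (Hc _ Hs) as E. clear Hs Hc.
apply (f_equal (fun a => h a x)) in E.
destruct hh as [Hm [Hj [Hn _]]]. rewrite Hm, Hj, Hn in E. simpl in E.
rewrite Hx in E. simpl in E. discriminate.
Qed.

Lemma emb_ft_r (A : bsig) X (h : A -> WKpow X) (E : emb h) (c : A) :
  (forall x, h c x <> t0) -> fibre_top c.
Proof.
destruct E as [hinj hh]. intros Hc b [E1 E2]. ptw A h hinj hh.
Qed.

Lemma emb_bot_l (A : bsig) X (h : A -> WKpow X) (E : emb h) (a : A) :
  in_bottom a -> forall x, h a x <> th.
Proof. destruct E as [hinj hh]. apply (emb_bottom hinj hh). Qed.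

Lemma emb_bot_r (A : bsig) X (h : A -> WKpow X) (E : emb h) (a : A) :
  (forall x, h a x <> th) -> in_bottom a.
Proof. destruct E as [hinj hh]. apply (emb_bottom hinj hh). Qed.

Lemma ft_iff (A : bsig) (HA : is_bochvar A) (c : A) :
  fibre_top c <-> c = bjoin c (bneg c).
Proof.
destruct HA as [X [h E]]. split.
- intro Hc. pose proof (emb_ft_l E Hc) as P. destruct E as [hinj hh]. ptw A h hinj hh.
- intro Hc. apply (emb_ft_r E). intros x. destruct E as [hinj hh].
  apply (f_equal (fun a => h a x)) in Hc.
  destruct hh as [Hm [Hj [Hn _]]]. rewrite Hj, Hn in Hc. simpl in Hc.
  destruct (h c x); simpl in *; congruence.
Qed.

Lemma ft_jn (A : bsig) (HA : is_bochvar A) (a : A) : fibre_top (bjoin a (bneg a)).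
Proof.
destruct HA as [X [h E]]. apply (emb_ft_r E). intro x.
destruct E as [_ [Hm [Hj [Hn _]]]]. rewrite Hj, Hn. simpl. destruct (h a x); simpl; congruence.
Qed.

Lemma bot_J2 (A : bsig) (HA : is_bochvar A) (a : A) : in_bottom (bJ2 a).
Proof.
destruct HA as [X [h E]]. apply (emb_bot_r E). intro x.
destruct E as [_ [Hm [Hj [Hn [HJ _]]]]]. rewrite HJ. simpl. destruct (h a x); simpl; congruence.
Qed.

Lemma Gcar_eq (A : bsig) (a b : Gcar A) : proj1_sig a = proj1_sig b -> a = b.
Proof.
destruct a as [a Ha], b as [b Hb]; simpl; intro E; subst; f_equal; apply proof_irrelevance.
Qed.

Ltac gptw A HA :=
  let X := fresh "X" in let h := fresh "h" in let E := fresh "E" in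
  apply Gcar_eq; simpl;
  pose proof HA as [X [h E]];
  repeat match goal with |- context [proj1_sig ?a] =>
    is_var a;
    let a' := fresh "a" in let Ha := fresh "Ha" in
    destruct a as [a' Ha]; simpl; let Hb := fresh "Hb" in pose proof (emb_bot_l E Ha) as Hb; clear Ha end;
  let hinj := fresh "hinj" in let hh := fresh "hh" in
  destruct E as [hinj hh]; ptw A h hinj hh.

Lemma Gamma_sys (A : bsig) (HA : is_bochvar A) : is_system (Gamma A HA).
Proof.
split.
- split; simpl; intros; gptw A HA.
- exists bone. split.
  + destruct HA as [X [h E]]. apply (emb_ft_r E). intro x.
    destruct E as [_ [_ [_ [_ [_ [_ H1]]]]]]. rewrite H1. simpl. congruence.
  + simpl. destruct HA as [X [h [hinj hh]]]. ptw A h hinj hh.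
- intros i j [c [Hc Ei]] [d [Hd Ej]]. exists (bmeet c d). split.
  + destruct HA as [X [h E]]. apply (emb_ft_r E). intro x.
    pose proof (emb_ft_l E Hc x). pose proof (emb_ft_l E Hd x).
    destruct E as [hi [Hm Hrest]]. rewrite Hm. simpl.
    destruct (h c x), (h d x); simpl; congruence.
  + simpl. rewrite Ei, Ej. destruct HA as [X [h [hinj hh]]]. ptw A h hinj hh.
Qed.

Lemma GammaMor_sys (A1 : bsig) (HA1 : is_bochvar A1) (A2 : bsig) (HA2 : is_bochvar A2)
  (f : A1 -> A2) (Hf : bhom f) : sys_hom (GammaMor HA1 HA2 Hf).
Proof.
pose proof Hf as [Hm [Hj [Hn [HJ [H0 H1]]]]].
split; [split; [|split; [|split; [|split]]]|].
- intros a b. apply Gcar_eq. simpl. apply Hm.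
- intros a b. apply Gcar_eq. simpl. apply Hj.
- intros a. apply Gcar_eq. simpl. apply Hn.
- apply Gcar_eq. simpl. apply H0.
- apply Gcar_eq. simpl. apply H1.
- intros k [c [Hc Ek]]. exists (f c). split.
  + apply (ft_iff HA2). apply (ft_iff HA1) in Hc. rewrite <- Hn, <- Hj, <- Hc. reflexivity.
  + simpl. rewrite Ek. apply HJ.
Qed.

Ltac xs := unfold XiMor, Xmk, Xidx, Xval in *; simpl in *.


Lemma Xcar_eq (S : bsys) (p q : Xcar S) : Xidx p = Xidx q -> Xval p = Xval q -> p = q.
Proof.
destruct p as [[i a] Hp], q as [[j b] Hq]; unfold Xidx, Xval; simpl; intros E1 E2; subst.
f_equal; apply proof_irrelevance.
Qed.

Lemma Xinv (S : bsys) (p : Xcar S) : ameet (Xval p) (Xidx p) = Xval p.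
Proof. exact (proj2 (proj2_sig p)). Qed.

Definition Xpt (S : bsys) := {phi : S -> bool | bhom2 phi}.

Definition Xemb (S : bsys) (HS : is_system S) (p : Xi S HS) : WKpow (Xpt S) :=
  fun phi => if proj1_sig phi (Xidx p) then (if proj1_sig phi (Xval p) then t1 else t0) else th.

Lemma Xi_bochvar (S : bsys) (HS : is_system S) : is_bochvar (Xi S HS).
Proof.
exists (Xpt S), (@Xemb S HS). split.
- intros p q E.
  pose proof (Xinv p) as Ip. pose proof (Xinv q) as Iq.
  assert (Ei : Xidx p = Xidx q).
  { apply (sep (sys_bool HS)). intros phi Hphi.
    apply (f_equal (fun f => f (exist _ phi Hphi))) in E. unfold Xemb in E. simpl in E.
    destruct (phi (Xidx p)), (phi (Xidx q)), (phi (Xval p)), (phi (Xval q)); congruence. }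
  apply Xcar_eq; [exact Ei|].
  apply (sep (sys_bool HS)). intros phi Hphi.
  pose proof Hphi as [Pm _].
  apply (f_equal phi) in Ip. apply (f_equal phi) in Iq. rewrite Pm in Ip, Iq.
  apply (f_equal (fun f => f (exist _ phi Hphi))) in E. unfold Xemb in E. simpl in E.
  rewrite Ei in E, Ip.
  destruct (phi (Xidx q)), (phi (Xval p)), (phi (Xval q)); simpl in *; congruence.
- split; [|split; [|split; [|split; [|split]]]]; intros;
  apply functional_extensionality; intros [phi [Pm [Pj [Pc [P0 P1]]]]];
  unfold Xemb; simpl; unfold Xidx, Xval; simpl; rewrite ?Pm, ?Pj, ?Pc, ?P0, ?P1;
  repeat match goal with |- context [phi ?a] => destruct (phi a) end; reflexivity.
Qed.

Lemma XiMor_hom (S1 : bsys) (HS1 : is_system S1) (S2 : bsys) (HS2 : is_system S2)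
  (g : S1 -> S2) (Hg : sys_hom g) : bhom (XiMor HS1 HS2 Hg).
Proof.
pose proof Hg as [[Gm [Gj [Gc [G0 G1]]]] _].
split; [|split; [|split; [|split; [|split]]]]; intros;
  apply Xcar_eq; xs; rewrite ?Gm, ?Gj, ?Gc, ?G0, ?G1;
  bool_ext (sys_bool HS2).
Qed.

Definition eta_idx (A : bsig) (HA : is_bochvar A) (a : A) : Gamma A HA :=
  exist _ (bJ2 (bjoin a (bneg a))) (bot_J2 HA _).

Lemma eta_idxI (A : bsig) (HA : is_bochvar A) (a : A) : sI (Gamma A HA) (eta_idx HA a).
Proof. exists (bjoin a (bneg a)). split; [apply (ft_jn HA)|reflexivity]. Qed.

Definition eta (A : bsig) (HA : is_bochvar A) (a : A) : Xi (Gamma A HA) (Gamma_sys HA) :=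
  Xmk (Gamma_sys HA) (eta_idx HA a) (eta_idxI HA a) (exist _ (bJ2 a) (bot_J2 HA a)).

Definition cpick (A : bsig) (HA : is_bochvar A) (p : Xi (Gamma A HA) (Gamma_sys HA)) : A :=
  proj1_sig (constructive_indefinite_description
    (fun c : A => fibre_top c /\ proj1_sig (Xidx p) = bJ2 c) (XidxI p)).

Lemma cpick_spec (A : bsig) (HA : is_bochvar A) (p : Xi (Gamma A HA) (Gamma_sys HA)) :
  fibre_top (cpick p) /\ proj1_sig (Xidx p) = bJ2 (cpick p).
Proof. unfold cpick. destruct constructive_indefinite_description as [c Hc]. exact Hc. Qed.

Definition etainv (A : bsig) (HA : is_bochvar A) (p : Xi (Gamma A HA) (Gamma_sys HA)) : A :=
  bmeet (proj1_sig (Xval p)) (cpick p).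

Lemma eta_hom (A : bsig) (HA : is_bochvar A) : bhom (eta HA).
Proof.
split; [|split; [|split; [|split; [|split]]]]; intros;
  apply Xcar_eq; apply Gcar_eq; unfold eta, eta_idx; xs;
  destruct HA as [X [h [hinj hh]]]; ptw A h hinj hh.
Qed.

Lemma etainv_eta (A : bsig) (HA : is_bochvar A) (a : A) : etainv (eta HA a) = a.
Proof.
unfold etainv. destruct (cpick_spec (eta HA a)) as [Hc Ec].
set (c := cpick (eta HA a)) in *. clearbody c.
unfold eta, eta_idx in *; xs.
destruct HA as [X [h E]]. pose proof (emb_ft_l E Hc) as P.
destruct E as [hinj hh]. ptw A h hinj hh.
Qed.

Lemma eta_etainv (A : bsig) (HA : is_bochvar A) (p : Xi (Gamma A HA) (Gamma_sys HA)) :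
  eta HA (etainv p) = p.
Proof.
unfold etainv. destruct (cpick_spec p) as [Hc Ec].
set (c := cpick p) in *. clearbody c.
pose proof (Xinv p) as Ip. apply (f_equal (@proj1_sig _ _)) in Ip.
pose proof HA as [X [h E]].
pose proof (emb_ft_l E Hc) as P.
pose proof (emb_bot_l E (proj2_sig (Xval p))) as Hv.
destruct E as [hinj hh].
apply Xcar_eq; apply Gcar_eq; unfold eta, eta_idx; xs; rewrite Ec in *; ptw A h hinj hh.
Qed.

Lemma inv_hom (A B : bsig) (e : A -> B) (i : B -> A) :
  bhom e -> (forall a, i (e a) = a) -> (forall b, e (i b) = b) -> bhom i.
Proof.
intros [Hm [Hj [Hn [HJ [H0 H1]]]]] K1 K2.
split; [|split; [|split; [|split; [|split]]]]; intros.
- rewrite <- (K2 a), <- (K2 b), <- Hm, !K1. reflexivity.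
- rewrite <- (K2 a), <- (K2 b), <- Hj, !K1. reflexivity.
- rewrite <- (K2 a), <- Hn, !K1. reflexivity.
- rewrite <- (K2 a), <- HJ, !K1. reflexivity.
- rewrite <- H0, K1. reflexivity.
- rewrite <- H1, K1. reflexivity.
Qed.

Lemma eta_nat (A1 : bsig) (HA1 : is_bochvar A1) (A2 : bsig) (HA2 : is_bochvar A2)
  (f : A1 -> A2) (Hf : bhom f) (a : A1) :
  eta HA2 (f a) = XiMor (Gamma_sys HA1) (Gamma_sys HA2) (GammaMor_sys HA1 HA2 Hf) (eta HA1 a).
Proof.
pose proof Hf as [Fm [Fj [Fn [FJ [F0 F1]]]]].
apply Xcar_eq; apply Gcar_eq; unfold eta, eta_idx; xs; unfold GammaMor; simpl;
  repeat progress rewrite ?Fm, ?Fj, ?Fn, ?FJ;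
  destruct HA2 as [X [h [hinj hh]]]; ptw A2 h hinj hh.
Qed.

Definition eps (S : bsys) (HS : is_system S) (p : Gamma (Xi S HS) (Xi_bochvar HS)) : S :=
  Xval (proj1_sig p).

Lemma bottom_idx (S : bsys) (HS : is_system S) (p : Xi S HS) : in_bottom p -> Xidx p = aone.
Proof.
intros [_ E]. apply (f_equal (@Xidx S)) in E. xs. bool_ext (sys_bool HS).
Qed.

Lemma epsinv_ok (S : bsys) (HS : is_system S) (y : S) :
  @in_bottom (Xi S HS) (Xmk HS aone (sys_I1 HS) y).
Proof. split; apply Xcar_eq; xs; bool_ext (sys_bool HS). Qed.

Definition epsinv (S : bsys) (HS : is_system S) (y : S) : Gamma (Xi S HS) (Xi_bochvar HS) :=
  exist _ (Xmk HS aone (sys_I1 HS) y) (epsinv_ok HS y).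

Lemma eps_hom (S : bsys) (HS : is_system S) : sys_hom (@eps S HS).
Proof.
split; [split; [|split; [|split; [|split]]]|].
- intros [p Hp] [q Hq]. pose proof (bottom_idx Hp) as Ep. pose proof (bottom_idx Hq) as Eq.
  unfold eps; xs. bool_ext (sys_bool HS).
- intros [p Hp] [q Hq]. pose proof (bottom_idx Hp) as Ep. pose proof (bottom_idx Hq) as Eq.
  unfold eps; xs. bool_ext (sys_bool HS).
- intros [p Hp]. pose proof (bottom_idx Hp) as Ep.
  unfold eps; xs. bool_ext (sys_bool HS).
- unfold eps; xs. bool_ext (sys_bool HS).
- unfold eps; xs. bool_ext (sys_bool HS).
- intros k [c [Hc Ek]]. unfold eps. rewrite Ek.
  pose (b := Xmk HS (Xidx c) (XidxI c) (Xidx c) : Xi S HS).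
  assert (Hs : same_fibre b c).
  { pose proof (Xinv c) as Ic.
    split; apply Xcar_eq; unfold b; xs; bool_ext (sys_bool HS). }
  pose proof (Hc b Hs) as E. pose proof (Xinv c) as Ic. pose proof (XidxI c) as Ik.
  apply (f_equal (@Xval S)) in E. unfold b in E.
  assert (E' : Xval (bJ2 c : Xi S HS) = Xidx c) by (xs; bool_ext (sys_bool HS)).
  rewrite E'. exact Ik.
Qed.

Lemma epsinv_eps (S : bsys) (HS : is_system S) x : epsinv HS (@eps S HS x) = x.
Proof.
destruct x as [p Hp]. apply Gcar_eq. simpl. pose proof (bottom_idx Hp) as E.
pose proof (Xinv p) as Ip.
apply Xcar_eq; unfold eps; xs; [rewrite E; reflexivity|]. bool_ext (sys_bool HS).
Qed.

Lemma eps_epsinv (S : bsys) (HS : is_system S) y : @eps S HS (epsinv HS y) = y.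
Proof. unfold eps; xs. bool_ext (sys_bool HS). Qed.

Lemma epsinv_hom (S : bsys) (HS : is_system S) : sys_hom (epsinv HS).
Proof.
split; [split; [|split; [|split; [|split]]]|].
- intros. apply Gcar_eq; apply Xcar_eq; xs; bool_ext (sys_bool HS).
- intros. apply Gcar_eq; apply Xcar_eq; xs; bool_ext (sys_bool HS).
- intros. apply Gcar_eq; apply Xcar_eq; xs; bool_ext (sys_bool HS).
- apply Gcar_eq; apply Xcar_eq; xs; bool_ext (sys_bool HS).
- apply Gcar_eq; apply Xcar_eq; xs; bool_ext (sys_bool HS).
- intros i Hi. exists (Xmk HS i Hi i). split.
  + intros b [E1 E2]. pose proof (Xinv b) as Ib.
    apply (f_equal (@Xidx S)) in E1. apply (f_equal (@Xidx S)) in E2. xs.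
    apply Xcar_eq; xs; bool_ext (sys_bool HS).
  + apply Xcar_eq; xs; bool_ext (sys_bool HS).
Qed.

Lemma eps_nat (S1 : bsys) (HS1 : is_system S1) (S2 : bsys) (HS2 : is_system S2)
  (g : S1 -> S2) (Hg : sys_hom g) (x : Gamma (Xi S1 HS1) (Xi_bochvar HS1)) :
  g (@eps S1 HS1 x) = @eps S2 HS2 (GammaMor (Xi_bochvar HS1) (Xi_bochvar HS2) (XiMor_hom HS1 HS2 Hg) x).
Proof.
destruct x as [p Hp]. pose proof (bottom_idx Hp) as E.
unfold eps; xs. rewrite E.
destruct Hg as [[_ [_ [_ [_ G1]]]] _]. rewrite G1. bool_ext (sys_bool HS2).
Qed.

Theorem theorem3p9 :
  exists (HG : forall (A : bsig) (HA : is_bochvar A), is_system (Gamma A HA))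
         (HX : forall (S : bsys) (HS : is_system S), is_bochvar (Xi S HS))
         (HGm : forall (A1 : bsig) (HA1 : is_bochvar A1)
                       (A2 : bsig) (HA2 : is_bochvar A2)
                       (f : A1 -> A2) (Hf : bhom f),
                  sys_hom (GammaMor HA1 HA2 Hf))
         (HXm : forall (S1 : bsys) (HS1 : is_system S1)
                       (S2 : bsys) (HS2 : is_system S2)
                       (g : S1 -> S2) (Hg : sys_hom g),
                  bhom (XiMor HS1 HS2 Hg)),
    (* Gamma is a functor *)
    (forall (A : bsig) (HA : is_bochvar A) (Hid : bhom (fun a : A => a))
            (x : Gamma A HA),
        GammaMor HA HA Hid x = x) /\
    (forall (A1 : bsig) (HA1 : is_bochvar A1) (A2 : bsig) (HA2 : is_bochvar A2)
            (A3 : bsig) (HA3 : is_bochvar A3)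
            (f : A1 -> A2) (g : A2 -> A3) (Hf : bhom f) (Hg : bhom g)
            (Hgf : bhom (fun a => g (f a))) (x : Gamma A1 HA1),
        GammaMor HA1 HA3 Hgf x = GammaMor HA2 HA3 Hg (GammaMor HA1 HA2 Hf x)) /\
    (* Xi is a functor *)
    (forall (S : bsys) (HS : is_system S) (Hid : sys_hom (fun a : S => a))
            (x : Xi S HS),
        XiMor HS HS Hid x = x) /\
    (forall (S1 : bsys) (HS1 : is_system S1) (S2 : bsys) (HS2 : is_system S2)
            (S3 : bsys) (HS3 : is_system S3)
            (f : S1 -> S2) (g : S2 -> S3) (Hf : sys_hom f) (Hg : sys_hom g)
            (Hgf : sys_hom (fun a => g (f a))) (x : Xi S1 HS1),
        XiMor HS1 HS3 Hgf x = XiMor HS2 HS3 Hg (XiMor HS1 HS2 Hf x)) /\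
    (* natural isomorphism  Id_B  ~=  Xi o Gamma *)
    (exists eta : forall (A : bsig) (HA : is_bochvar A),
                    A -> Xi (Gamma A HA) (HG A HA),
       (forall (A : bsig) (HA : is_bochvar A),
          bhom (eta A HA) /\
          exists inv : Xi (Gamma A HA) (HG A HA) -> A,
            bhom inv /\ (forall a, inv (eta A HA a) = a) /\
            (forall y, eta A HA (inv y) = y)) /\
       (forall (A1 : bsig) (HA1 : is_bochvar A1) (A2 : bsig) (HA2 : is_bochvar A2)
               (f : A1 -> A2) (Hf : bhom f) (a : A1),
          eta A2 HA2 (f a)
          = XiMor (HG A1 HA1) (HG A2 HA2) (HGm A1 HA1 A2 HA2 f Hf) (eta A1 HA1 a))) /\
    (* natural isomorphism  Gamma o Xi  ~=  Id_S *)
    (exists eps : forall (S : bsys) (HS : is_system S),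
                    Gamma (Xi S HS) (HX S HS) -> S,
       (forall (S : bsys) (HS : is_system S),
          sys_hom (eps S HS) /\
          exists inv : S -> Gamma (Xi S HS) (HX S HS),
            sys_hom inv /\ (forall x, inv (eps S HS x) = x) /\
            (forall y, eps S HS (inv y) = y)) /\
       (forall (S1 : bsys) (HS1 : is_system S1) (S2 : bsys) (HS2 : is_system S2)
               (g : S1 -> S2) (Hg : sys_hom g) (x : Gamma (Xi S1 HS1) (HX S1 HS1)),
          g (eps S1 HS1 x)
          = eps S2 HS2 (GammaMor (HX S1 HS1) (HX S2 HS2) (HXm S1 HS1 S2 HS2 g Hg) x))).
Proof.
exists (@Gamma_sys), (@Xi_bochvar), (@GammaMor_sys), (@XiMor_hom).
split; [|split; [|split; [|split; [|split]]]].
- intros A HA Hid x. apply Gcar_eq. reflexivity.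
- intros. apply Gcar_eq. reflexivity.
- intros S HS Hid x. apply Xcar_eq; [reflexivity|]. apply Xinv.
- intros. pose proof Hg as [[Gm _] _]. apply Xcar_eq; xs; [reflexivity|].
  rewrite Gm. bool_ext (sys_bool HS3).
- exists (@eta). split.
  + intros A HA. split; [apply eta_hom|]. exists (@etainv A HA).
    split; [|split; [apply etainv_eta|apply eta_etainv]].
    apply (@inv_hom _ _ (eta HA) (@etainv A HA) (eta_hom HA)); [apply etainv_eta|apply eta_etainv].
  + intros. apply eta_nat.
- exists (@eps). split.
  + intros S HS. split; [apply eps_hom|]. exists (@epsinv S HS).
    split; [apply epsinv_hom|split; [apply epsinv_eps|apply eps_epsinv]].
  + intros. apply eps_nat.
Qed.
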